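(* Assume the payoffs are normalized with $T=1$, $S=0$. Let $\mathbf p=(p_1,p_2,p_3,p_4)$ be a firm memory-one strategy for X. Then $\mathbf p$ is strictly firm if and only if $$p_3<\frac{P}{R-P}(1-p_1)\qquad\text{and}\qquad p_3<\frac{P}{1-P}(1-p_2).$$ Moreover, if the X Press-Dyson vector of $\mathbf p$ is $\mathbf p-(1,1,0,0)=\alpha\mathbf S_X+\beta\mathbf S_Y+\gamma\mathbf 1+\delta\mathbf e_{23}$, then $\mathbf p$ is strictly firm if and only if $-\delta>\max(\alpha,(1-2P)\alpha)$.
   Context: Iterated Prisoner's Dilemma with normalized payoffs $T=1>R>P>S=0$, $2R>1$; outcomes ordered $cc,cd,dc,dd$ (first letter X's play, second Y's; $c$ = cooperate, $d$ = defect); payoff vectors $\mathbf S_X=(R,0,1,P)$, $\mathbf S_Y=(R,1,0,P)$, $\mathbf 1=(1,1,1,1)$, $\mathbf e_{23}=(0,1,1,0)$. A memory-one strategy for X is $\mathbf p\in[0,1]^4$, $p_i$ the probability X plays $c$ after the $i$-th outcome; it is firm if $p_4=0$. A strategy pattern for Y is any (possibly randomized, history-dependent) rule for Y's play. With $\mathbf v^n$ the distribution of the outcome of round $n$, a limit distribution is any limit point $\mathbf v=(v_1,\dots,v_4)$ of the Cesàro averages $\frac1n\sum_{k\le n}\mathbf v^k$, with $s_X=\langle\mathbf v\cdot\mathbf S_X\rangle$, $s_Y=\langle\mathbf v\cdot\mathbf S_Y\rangle$. $\mathbf p$ is strictly firm if it is firm and, for every strategy pattern of Y and every associated limit distribution,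 $s_Y\ge P$ implies $v_4=1$ (and so $s_Y=s_X=P$). *)

(* Defs.v *)
From HB Require Import structures.
From mathcomp Require Import all_boot all_order all_algebra.
From mathcomp Require Import reals.
Set Implicit Arguments. Unset Strict Implicit. Unset Printing Implicit Defensive.
Import Order.TTheory GRing.Theory Num.Theory.
Local Open Scope ring_scope.

(* Outcomes of a round, ordered cc, cd, dc, dd (X's play first). *)
Definition outcome := 'I_4.
Definition o_cc : outcome := @Ordinal 4 0 erefl.
Definition o_cd : outcome := @Ordinal 4 1 erefl.
Definition o_dc : outcome := @Ordinal 4 2 erefl.
Definition o_dd : outcome := @Ordinal 4 3 erefl.

Definition xcoop (o : outcome) : bool := (val o < 2)%N.
Definition ycoop (o : outcome) : bool := (val o == 0)%N || (val o == 2)%N.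

Section IPD.
Variable F : realType.

Definition vec4 (a b c d : F) : outcome -> F :=
  fun o => match val o with 0 => a | 1 => b | 2 => c | _ => d end%N.

(* normalized payoffs T = 1, S = 0 *)
Definition S_X (Rp Pp : F) := vec4 Rp 0 1 Pp.
Definition S_Y (Rp Pp : F) := vec4 Rp 1 0 Pp.
Definition one4 := vec4 1 1 1 1.
Definition e23 := vec4 0 1 1 0.

Definition prob_of (b : bool) (x : F) := if b then x else 1 - x.

(* A memory-one strategy p for X with initial cooperation probability x0,
   and a strategy pattern q for Y : q h = probability that Y cooperates
   after the history h (sequence of past outcomes, oldest first). *)
Definition xprob (p : outcome -> F) (x0 : F) (h : seq outcome) : F :=
  if h is [::] then x0 else p (last o_cc h).

Definition trans (p : outcome -> F) (x0 : F) (q : seq outcome -> F)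
    (h : seq outcome) (o : outcome) : F :=
  prob_of (xcoop o) (xprob p x0 h) * prob_of (ycoop o) (q h).

Definition hprob p x0 q (h : seq outcome) : F :=
  \prod_(i < size h) trans p x0 q (take i h) (nth o_cc h i).

(* vdist p x0 q n = v^{n+1}, distribution of the outcome of round n+1 *)
Definition vdist p x0 q (n : nat) (o : outcome) : F :=
  \sum_(h : n.-tuple outcome) hprob p x0 q h * trans p x0 q h o.

Definition cesaro p x0 q (n : nat) (o : outcome) : F :=
  (n.+1%:R)^-1 * \sum_(k < n.+1) vdist p x0 q k o.

Definition limit_dist p x0 q (v : outcome -> F) : Prop :=
  forall eps : F, 0 < eps -> forall N : nat, exists2 n : nat, (N <= n)%N &
    forall o : outcome, `|cesaro p x0 q n o - v o| < eps.

Definition dotv (v w : outcome -> F) : F := \sum_(o : outcome) v o * w o.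

Definition memory_one (p : outcome -> F) : Prop :=
  forall o, 0 <= p o <= 1.

Definition strategy_pattern (q : seq outcome -> F) : Prop :=
  forall h, 0 <= q h <= 1.

Definition firm (p : outcome -> F) : Prop := p o_dd = 0.

Definition strictly_firm (Rp Pp : F) (p : outcome -> F) : Prop :=
  firm p /\
  forall (x0 : F) (q : seq outcome -> F) (v : outcome -> F),
    0 <= x0 <= 1 -> strategy_pattern q -> limit_dist p x0 q v ->
    Pp <= dotv v (S_Y Rp Pp) -> v o_dd = 1.

End IPD.

(* Main.v *)
Require Import Defs.
From HB Require Import structures.
From mathcomp Require Import all_boot all_order all_algebra.
From mathcomp Require Import reals ring lra.
Import Order.TTheory GRing.Theory Num.Theory.
Local Open Scope ring_scope.
Set Implicit Arguments. Unset Strict Implicit.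

Lemma ocase (o : outcome) : o = o_cc \/ o = o_cd \/ o = o_dc \/ o = o_dd.
Proof.
case: o => [[|[|[|[|n]]]] Hn] //.
- by left; apply: val_inj.
- by right; left; apply: val_inj.
- by right; right; left; apply: val_inj.
- by right; right; right; apply: val_inj.
Qed.

Section Gen.
Variable F : realType.
Implicit Types (p : outcome -> F) (q : seq outcome -> F).

Lemma sum4 (f : outcome -> F) :
  \sum_(o : outcome) f o = f o_cc + f o_cd + f o_dc + f o_dd.
Proof.
rewrite !big_ord_recl big_ord0 addr0 !addrA.
by congr (_ + _ + _ + _); congr f; apply: val_inj.
Qed.

Lemma hprob_rcons p x0 q (h : seq outcome) o :
  hprob p x0 q (rcons h o) = hprob p x0 q h * trans p x0 q h o.
Proof.
rewrite /hprob size_rcons big_ord_recr /=; congr (_ * _).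
  apply: eq_bigr => i _.
  by rewrite -cats1 takel_cat ?nth_cat ?ltn_ord // ltnW.
by rewrite -cats1 take_cat ltnn subnn take0 cats0 nth_cat ltnn subnn.
Qed.

Lemma sum_tupleS k (G : k.+1.-tuple outcome -> F) :
  \sum_(t : k.+1.-tuple outcome) G t =
  \sum_(t : k.-tuple outcome) \sum_(o : outcome) G [tuple of rcons t o].
Proof.
rewrite pair_big /=.
pose g := fun t : k.+1.-tuple outcome =>
  ([tuple of belast (thead t) (behead t)], last (thead t) (behead t)).
rewrite (reindex (fun pr : k.-tuple outcome * outcome => [tuple of rcons pr.1 pr.2])) //.
exists g => [[t o] _ | t _].
  rewrite /g; set u := [tuple of rcons t o].
  have : val u = rcons t o by [].
  case: (tupleP u) => y s' /= E.
  rewrite lastI in E; move/rcons_inj: E => [E1 E2].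
  by congr (_, _) => //; apply: val_inj.
apply: val_inj; rewrite /g /=.
case: (tupleP t) => x s /=. by rewrite -lastI.
Qed.

Section Proc.
Variables (p : outcome -> F) (x0 : F) (q : seq outcome -> F).
Hypotheses (Hp : memory_one p) (Hx0 : 0 <= x0 <= 1) (Hq : strategy_pattern q).

Lemma xprob01 h : 0 <= xprob p x0 h <= 1.
Proof. by case: h => [|a h] //=; apply: Hp. Qed.

Lemma prob_of01 b (x : F) : 0 <= x <= 1 -> 0 <= prob_of b x <= 1.
Proof. by case: b => /andP[h1 h2] /=; apply/andP; split; lra. Qed.

Lemma trans_ge0 h o : 0 <= trans p x0 q h o.
Proof.
rewrite /trans; apply: mulr_ge0.
  by case/andP: (prob_of01 (xcoop o) (xprob01 h)).
by case/andP: (prob_of01 (ycoop o) (Hq h)).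
Qed.

Lemma sum_trans h : \sum_(o : outcome) trans p x0 q h o = 1.
Proof. rewrite sum4 /trans /=; ring. Qed.

Lemma hprob_ge0 h : 0 <= hprob p x0 q h.
Proof. by apply: prodr_ge0 => i _; apply: trans_ge0. Qed.

Lemma L1 k (G : seq outcome -> F) :
  \sum_(t : k.+1.-tuple outcome) hprob p x0 q t * G t =
  \sum_(t : k.-tuple outcome) hprob p x0 q t *
     \sum_(o : outcome) trans p x0 q t o * G (rcons t o).
Proof.
rewrite sum_tupleS; apply: eq_bigr => t _.
rewrite mulr_sumr; apply: eq_bigr => o _ /=.
by rewrite hprob_rcons mulrA.
Qed.

Lemma core k (G : outcome -> F) :
  \sum_(t : k.+1.-tuple outcome) hprob p x0 q t * G (last o_cc t) =
  \sum_(o : outcome) vdist p x0 q k o * G o.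
Proof.
rewrite (L1 k (fun h => G (last o_cc h))) /vdist.
under eq_bigr => t _ do rewrite mulr_sumr.
rewrite exchange_big /=; apply: eq_bigr => o _.
rewrite mulr_suml; apply: eq_bigr => t _.
by rewrite last_rcons mulrA.
Qed.

Lemma hsum k : \sum_(t : k.-tuple outcome) hprob p x0 q t = 1.
Proof.
elim: k => [|k IH].
  rewrite (eq_bigr (fun _ => hprob p x0 q [::])); last first.
    by move=> t _; rewrite tuple0.
  by rewrite sumr_const card_tuple expn0 /hprob big_ord0.
have := L1 k (fun _ => 1).
under eq_bigr => t _ do rewrite mulr1.
move=> ->; rewrite -{2}IH; apply: eq_bigr => t _.
under eq_bigr => o _ do rewrite mulr1.
by rewrite sum_trans mulr1.
Qed.

Lemma vsum k : \sum_(o : outcome) vdist p x0 q k o = 1.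
Proof.
have := core k (fun _ => 1).
under eq_bigr => t _ do rewrite mulr1.
under [in RHS]eq_bigr => t _ do rewrite mulr1.
by move=> <-; rewrite hsum.
Qed.

Lemma vdist_ge0 k o : 0 <= vdist p x0 q k o.
Proof.
by apply: sumr_ge0 => t _; apply: mulr_ge0; [apply: hprob_ge0|apply: trans_ge0].
Qed.

Lemma vdist_le1 k o : vdist p x0 q k o <= 1.
Proof.
have := vsum k; rewrite sum4 => E.
have := vdist_ge0 k o_cc; have := vdist_ge0 k o_cd.
have := vdist_ge0 k o_dc; have := vdist_ge0 k o_dd.
by case: (ocase o) => [->|[->|[->|->]]]; lra.
Qed.

Lemma xprob_tuple k (t : k.+1.-tuple outcome) : xprob p x0 t = p (last o_cc t).
Proof. by case: (tupleP t) => y s /=; case: (s : seq _) => //. Qed.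

Lemma vdist0 o : vdist p x0 q 0 o = trans p x0 q [::] o.
Proof.
rewrite /vdist (eq_bigr (fun _ => hprob p x0 q [::] * trans p x0 q [::] o)); last first.
  by move=> t _; rewrite tuple0.
by rewrite sumr_const card_tuple expn0 /hprob big_ord0 mul1r.
Qed.

Lemma vdistS k o : vdist p x0 q k.+1 o =
  \sum_(t : k.+1.-tuple outcome) hprob p x0 q t * trans p x0 q t o.
Proof. by []. Qed.

Definition ee k := vdist p x0 q k o_cc + vdist p x0 q k o_cd.

Lemma akin_step k : ee k.+1 =
  vdist p x0 q k o_cc * p o_cc + vdist p x0 q k o_cd * p o_cd +
  vdist p x0 q k o_dc * p o_dc + vdist p x0 q k o_dd * p o_dd.
Proof.
rewrite -(sum4 (fun o => vdist p x0 q k o * p o)) -(core k p) /ee !vdistS -big_split /=; apply: eq_bigr => t _.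
by rewrite -mulrDr /trans /= xprob_tuple; congr (_ * _); ring.
Qed.

Lemma ee01 k : 0 <= ee k <= 1.
Proof.
have := vsum k; rewrite sum4 /ee => E.
have := vdist_ge0 k o_cc; have := vdist_ge0 k o_cd.
have := vdist_ge0 k o_dc; have := vdist_ge0 k o_dd.
move=> *; apply/andP; split; lra.
Qed.

Definition Sm n o := \sum_(k < n.+1) vdist p x0 q k o.

Lemma SmS n o : Sm n.+1 o = Sm n o + vdist p x0 q n.+1 o.
Proof. by rewrite /Sm big_ord_recr. Qed.

Lemma Sm0 o : Sm 0 o = vdist p x0 q 0 o.
Proof. by rewrite /Sm big_ord1. Qed.

Lemma Sm_ge0 n o : 0 <= Sm n o.
Proof. by apply: sumr_ge0 => k _; apply: vdist_ge0. Qed.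

Lemma Sm_sum n : Sm n o_cc + Sm n o_cd + Sm n o_dc + Sm n o_dd = n.+1%:R.
Proof.
elim: n => [|n IH]; first by rewrite !Sm0 -sum4 vsum.
rewrite !SmS -[n.+2%:R]natr1 -IH -(vsum n.+1) sum4; ring.
Qed.

Lemma Sm_akin n :
  Sm n o_cc * (p o_cc - 1) + Sm n o_cd * (p o_cd - 1) +
  Sm n o_dc * p o_dc + Sm n o_dd * p o_dd = ee n.+1 - ee 0.
Proof.
elim: n => [|n IH]; first by rewrite !Sm0 akin_step /ee; ring.
rewrite !SmS (akin_step n.+1); move: IH; rewrite /ee => IH; lra.
Qed.

Lemma cesaroE n o : cesaro p x0 q n o = Sm n o / n.+1%:R.
Proof. by rewrite /cesaro /Sm mulrC. Qed.

Lemma N_gt0 n : 0 < n.+1%:R :> F.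
Proof. by rewrite ltr0n. Qed.

Lemma bound_n (x : F) (n : nat) : 0 <= x -> (Num.bound x <= n)%N -> x < n.+1%:R.
Proof.
move=> x0' Hn; apply: lt_le_trans (archi_boundP x0') _.
by rewrite ler_nat; apply: leq_trans Hn _.
Qed.

Lemma G3 (v : outcome -> F) K :
  (forall n o, `|Sm n o - n.+1%:R * v o| <= K) -> limit_dist p x0 q v.
Proof.
move=> HK eps Heps N.
have K0 : 0 <= K by apply: le_trans (HK 0%N o_cc); apply: normr_ge0.
exists (maxn N (Num.bound (K / eps))); first by rewrite leq_maxl.
set n := maxn _ _ => o.
have Hn : K / eps < n.+1%:R.
  by apply: bound_n; [apply: divr_ge0; lra | rewrite leq_maxr].
rewrite ltr_pdivrMr // in Hn.
have -> : cesaro p x0 q n o - v o = (Sm n o - n.+1%:R * v o) / n.+1%:R.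
  by rewrite cesaroE; field; rewrite addrC natr1 pnatr_eq0.
rewrite ltr_norml ltr_pdivlMr ?N_gt0 // ltr_pdivrMr ?N_gt0 //.
move: (HK n o); rewrite ler_norml => /andP[h1 h2].
apply/andP; split; lra.
Qed.

Lemma G2 (v : outcome -> F) o : limit_dist p x0 q v -> 0 <= v o.
Proof.
move=> Hv; rewrite leNgt; apply/negP => vneg.
have H0 : 0 < - v o by rewrite oppr_gt0.
have [n _ Hc] := Hv _ H0 0%N.
move: (Hc o); rewrite ltr_norml => /andP[_ h].
have : 0 <= cesaro p x0 q n o.
  by rewrite cesaroE; apply: divr_ge0; [apply: Sm_ge0 | apply: ltW; apply: N_gt0].
lra.
Qed.

Lemma zero_of_small (x : F) : (forall e, 0 < e -> `|x| <= e) -> x = 0.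
Proof.
move=> H; apply/eqP; apply: contraT => hx.
have hx' : 0 < `|x| by rewrite normr_gt0.
have H2 : 0 < `|x| / 2 by apply: divr_gt0 => //; lra.
have := H _ H2.
lra.
Qed.

Lemma G1 (v w : outcome -> F) a K :
  (forall n, `|\sum_(o : outcome) Sm n o * w o - n.+1%:R * a| <= K) ->
  limit_dist p x0 q v -> dotv v w = a.
Proof.
move=> HK Hv; apply/eqP; rewrite -subr_eq0; apply/eqP; apply: zero_of_small => e He.
have K0 : 0 <= K by apply: le_trans (HK 0%N); apply: normr_ge0.
set S := \sum_(o : outcome) `|w o|.
have S0 : 0 <= S by apply: sumr_ge0 => o _; apply: normr_ge0.
set W := S + 1.
have W0 : 0 < W by rewrite /W; lra.
have eps0 : 0 < e / (2 * W) by apply: divr_gt0 => //; lra.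
have [n Hn Hc] := Hv _ eps0 (Num.bound (2 * K / e)).
have HN : 2 * K / e < n.+1%:R by apply: bound_n => //; apply: divr_ge0; lra.
rewrite ltr_pdivrMr // in HN.
have E1 : `|\sum_(o : outcome) cesaro p x0 q n o * w o - a| * n.+1%:R <= K.
  have -> : \sum_(o : outcome) cesaro p x0 q n o * w o - a =
            (\sum_(o : outcome) Sm n o * w o - n.+1%:R * a) / n.+1%:R.
    under eq_bigr => o _ do rewrite cesaroE mulrAC.
    by rewrite -mulr_suml; field; rewrite addrC natr1 pnatr_eq0.
  by rewrite normrM normfV (gtr0_norm (N_gt0 n)) mulrVK // unitfE pnatr_eq0.
have E2 : `|dotv v w - \sum_(o : outcome) cesaro p x0 q n o * w o| <= e / 2.
  rewrite /dotv -sumrB; apply: le_trans (ler_norm_sum _ _ _) _.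
  have H3 : \sum_(o : outcome) `|v o * w o - cesaro p x0 q n o * w o| <=
            \sum_(o : outcome) e / (2 * W) * `|w o|.
    apply: ler_sum => o _; rewrite -mulrBl normrM; apply: ler_wpM2r.
      exact: normr_ge0.
    by apply: ltW; rewrite distrC; apply: Hc.
  apply: le_trans H3 _.
  rewrite -mulr_sumr -/S.
  have -> : e / 2 = e / (2 * W) * W by field; lra.
  by apply: ler_wpM2l; [apply: ltW | rewrite /W; lra].
set A := dotv v w; set B := \sum_(o : outcome) _ in E1 E2.
have T : `|A - a| <= `|A - B| + `|B - a|.
  by have := ler_normD (A - B) (B - a); rewrite addrA subrK.
have : `|B - a| * n.+1%:R < e / 2 * n.+1%:R by lra.
rewrite ltr_pM2r ?N_gt0 //; lra.
Qed.

End Proc.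
End Gen.

Section Main.
Variable F : realType.

Lemma Gdeg (p : outcome -> F) x0 q v :
  (forall k o, vdist p x0 q k o = v o) -> limit_dist p x0 q v.
Proof.
move=> H; apply: (G3 (K := 0)) => n o.
rewrite /Sm (eq_bigr (fun _ => v o)) // sumr_const card_ord mulr_natl.
by rewrite subrr normr0.
Qed.

Lemma absdiv (x c D : F) : 0 < D -> - c <= x * D <= c -> `|x| <= c / D.
Proof.
move=> D0 /andP[h1 h2]; rewrite ler_norml ler_pdivlMr // h2 andbT.
by rewrite -mulNr ler_pdivrMr.
Qed.

Lemma mul_bound (e y : F) : -1 <= e <= 1 -> 0 <= y <= 1 -> -1 <= e * y <= 1.
Proof. by move=> /andP[h1 h2] /andP[h3 h4]; apply/andP; split; nra. Qed.

Lemma alg_sf (Pp Rp p1 p2 p3 v1 v2 v3 v4 : F) :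
  0 < Pp -> Pp < Rp ->
  p3 * (Rp - Pp) < Pp * (1 - p1) -> p3 * (1 - Pp) < Pp * (1 - p2) ->
  0 <= p1 -> p1 <= 1 -> 0 <= p2 -> p2 <= 1 -> 0 <= p3 -> p3 <= 1 ->
  0 <= v1 -> 0 <= v2 -> 0 <= v3 -> 0 <= v4 ->
  v1 + v2 + v3 + v4 = 1 ->
  v1 * (p1 - 1) + v2 * (p2 - 1) + v3 * p3 = 0 ->
  Pp <= v1 * Rp + v2 + v4 * Pp -> v4 = 1.
Proof.
move=> HP0 HPR c1 c2 p1a p1b p2a p2b p3a p3b w1 w2 w3 w4 Hs Ha HsY.
have T1 : v4 = 1 - v1 - v2 - v3 by lra.
have X0 : 0 <= (Rp - Pp) * v1 + (1 - Pp) * v2 - Pp * v3.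
  by rewrite T1 in HsY; lra.
have pX : 0 <= p3 * ((Rp - Pp) * v1 + (1 - Pp) * v2 - Pp * v3).
  by apply: mulr_ge0.
have Ak2 : Pp * (v3 * p3) = Pp * (v1 * (1 - p1) + v2 * (1 - p2)).
  by congr (_ * _); lra.
have A1 : 0 <= v1 * (Pp * (1 - p1) - p3 * (Rp - Pp)).
  by apply: mulr_ge0 => //; lra.
have A2 : 0 <= v2 * (Pp * (1 - p2) - p3 * (1 - Pp)).
  by apply: mulr_ge0 => //; lra.
have B1 : v1 * (Pp * (1 - p1) - p3 * (Rp - Pp)) = 0 by lra.
have B2 : v2 * (Pp * (1 - p2) - p3 * (1 - Pp)) = 0 by lra.
move/eqP: B1; rewrite mulf_eq0 => /orP[/eqP Z1|]; last first.
  by move/eqP => ?; lra.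
move/eqP: B2; rewrite mulf_eq0 => /orP[/eqP Z2|]; last first.
  by move/eqP => ?; lra.
subst v1 v2.
have Z3 : v3 = 0.
  apply/eqP; rewrite eq_le w3 andbT.
  have : 0 <= - Pp * v3 by move: X0; rewrite !mulr0 !add0r mulNr.
  by rewrite mulNr oppr_ge0 pmulr_rle0.
lra.
Qed.

Variables (Rp Pp : F) (p : outcome -> F).
Hypotheses (HP0 : 0 < Pp) (HPR : Pp < Rp) (HR1 : Rp < 1) (Hp : memory_one p)
  (Hf : firm p).

Lemma caseA : Pp * (1 - p o_cc) <= p o_dc * (Rp - Pp) -> ~ strictly_firm Rp Pp p.
Proof.
move=> H [_ SF].
pose q := fun _ : seq outcome => 1 : F.
have Hx0 : 0 <= (1:F) <= 1 by apply/andP; split; lra.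
have Hq : strategy_pattern q by move=> h; rewrite /q; apply/andP; split; lra.
have cd0 k : vdist p 1 q k o_cd = 0.
  by rewrite /vdist big1 // => t _; rewrite /trans /q /= subrr !mulr0.
have dd0 k : vdist p 1 q k o_dd = 0.
  by rewrite /vdist big1 // => t _; rewrite /trans /q /= subrr !mulr0.
have Scd n : Sm p 1 q n o_cd = 0 by rewrite /Sm big1.
have Sdd n : Sm p 1 q n o_dd = 0 by rewrite /Sm big1.
case/andP: (Hp o_cc) => p1a p1b; case/andP: (Hp o_dc) => p3a p3b.
set D := 1 - p o_cc + p o_dc.
have [Dz|Dnz] := eqVneq D 0.
  move/eqP: Dz; rewrite /D => Dz.
  have hp1 : p o_cc = 1 by lra.
  have hp3 : p o_dc = 0 by lra.
  have cc1 k : vdist p 1 q k o_cc = 1.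
    elim: k => [|k IH]; first by rewrite vdist0 /trans /q /= mulr1.
    move: (akin_step p 1 q k); rewrite /ee !cd0 !dd0 IH hp1 hp3 => ?; lra.
  have dc0 k : vdist p 1 q k o_dc = 0.
    by have := vsum p 1 q k; rewrite sum4 cc1 cd0 dd0; lra.
  have Hv : limit_dist p 1 q (vec4 1 0 0 0).
    apply: Gdeg => k o; case: (ocase o) => [->|[->|[->|->]]]; rewrite /vec4 /=.
    - exact: cc1.
    - exact: cd0.
    - exact: dc0.
    - exact: dd0.
  have := SF 1 q _ Hx0 Hq Hv; rewrite /vec4 /= => HH.
  have : (0:F) = 1.
    apply: HH; rewrite /dotv sum4 /S_Y /vec4 /= !mul0r mul1r !addr0; exact: ltW.
  by move/eqP; rewrite eq_sym oner_eq0.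
have D0 : 0 < D by rewrite lt_def Dnz /D; lra.
pose v := vec4 (p o_dc / D) 0 ((1 - p o_cc) / D) 0.
have Hv : limit_dist p 1 q v.
  apply: (G3 (K := 1 / D)) => n o.
  have S := Sm_sum p 1 q n; have A := Sm_akin p 1 q n.
  have E := ee01 Hp Hx0 Hq n.+1; have E0 := ee01 Hp Hx0 Hq 0.
  rewrite Scd Sdd in S A.
  have Hb : Sm p 1 q n o_dc = n.+1%:R - Sm p 1 q n o_cc by lra.
  rewrite Hb in A.
  case: (ocase o) => [->|[->|[->|->]]]; rewrite /v /vec4 /=.
  - apply: absdiv => //.
    have -> : (Sm p 1 q n o_cc - n.+1%:R * (p o_dc / D)) * D =
              Sm p 1 q n o_cc * D - n.+1%:R * p o_dc by field.
    rewrite /D; move: E E0 => /andP[? ?] /andP[? ?]; apply/andP; split; lra.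
  - by rewrite Scd mulr0 subrr normr0 divr_ge0 //; lra.
  - apply: absdiv => //; rewrite Hb.
    have -> : (n.+1%:R - Sm p 1 q n o_cc - n.+1%:R * ((1 - p o_cc) / D)) * D =
              n.+1%:R * D - Sm p 1 q n o_cc * D - n.+1%:R * (1 - p o_cc) by field.
    rewrite /D; move: E E0 => /andP[? ?] /andP[? ?]; apply/andP; split; lra.
  - by rewrite Sdd mulr0 subrr normr0 divr_ge0 //; lra.
have := SF 1 q _ Hx0 Hq Hv; rewrite /v /vec4 /= => HH.
have : (0:F) = 1.
  apply: HH; rewrite /dotv sum4 /S_Y /vec4 /=.
  have -> : p o_dc / D * Rp + 0 * 1 + (1 - p o_cc) / D * 0 + 0 * Pp =
            p o_dc * Rp / D by field.
  rewrite ler_pdivlMr // /D; lra.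
by move/eqP; rewrite eq_sym oner_eq0.
Qed.


Lemma caseB : Pp * (1 - p o_cd) <= p o_dc * (1 - Pp) -> ~ strictly_firm Rp Pp p.
Proof.
move=> H [_ SF].
pose q := fun h : seq outcome => if last o_cc h == o_dd then 1 else 0 : F.
have Hx0 : 0 <= (1:F) <= 1 by apply/andP; split; lra.
have Hq : strategy_pattern q.
  by move=> h; rewrite /q; case: ifP => _; apply/andP; split; lra.
have Hf' : p o_dd = 0 by exact: Hf.
have tcc h : trans p 1 q h o_cc = 0.
  rewrite /trans /q /=; case: h => [|a h] //=; first by rewrite mulr0.
  by case: ifP => [/eqP ->|_]; rewrite ?Hf' ?mul0r ?mulr0.
have cc0 k : vdist p 1 q k o_cc = 0.
  by rewrite /vdist big1 // => t _; rewrite tcc mulr0.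
have dcS k : vdist p 1 q k.+1 o_dc = vdist p 1 q k o_dd.
  rewrite vdistS.
  transitivity (\sum_(t : k.+1.-tuple outcome)
     hprob p 1 q t * (fun o => if o == o_dd then 1 else 0 : F) (last o_cc t)).
    apply: eq_bigr => t _; congr (_ * _).
    rewrite /trans /= xprob_tuple /q.
    by case: ifP => [/eqP ->|_]; rewrite ?Hf' ?subr0 ?mulr1 ?mulr0.
  by rewrite (core p 1 q k (fun o => if o == o_dd then 1 else 0)) sum4 /= !mulr0 mulr1 !add0r.
have Scc n : Sm p 1 q n o_cc = 0 by rewrite /Sm big1.
have Srel n : Sm p 1 q n o_dc =
    vdist p 1 q 0 o_dc + Sm p 1 q n o_dd - vdist p 1 q n o_dd.
  elim: n => [|n IH]; first by rewrite !Sm0; ring.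
  by rewrite !SmS IH dcS; ring.
case/andP: (Hp o_cd) => p2a p2b; case/andP: (Hp o_dc) => p3a p3b.
set D := p o_dc + 2 * (1 - p o_cd).
have [Dz|Dnz] := eqVneq D 0.
  move/eqP: Dz; rewrite /D => Dz.
  have hp2 : p o_cd = 1 by lra.
  have hp3 : p o_dc = 0 by lra.
  have cd1 k : vdist p 1 q k o_cd = 1.
    elim: k => [|k IH]; first by rewrite vdist0 /trans /q /= subr0 mulr1.
    move: (akin_step p 1 q k); rewrite /ee !cc0 IH hp2 hp3 Hf' => ?; lra.
  have dc0 k : vdist p 1 q k o_dc = 0.
    have := vsum p 1 q k; rewrite sum4 cc0 cd1 => ?.
    have := vdist_ge0 Hp Hx0 Hq k o_dc; have := vdist_ge0 Hp Hx0 Hq k o_dd; lra.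
  have dd0 k : vdist p 1 q k o_dd = 0.
    have := vsum p 1 q k; rewrite sum4 cc0 cd1 dc0 => ?; lra.
  have Hv : limit_dist p 1 q (vec4 0 1 0 0).
    apply: Gdeg => k o; case: (ocase o) => [->|[->|[->|->]]]; rewrite /vec4 /=.
    - exact: cc0.
    - exact: cd1.
    - exact: dc0.
    - exact: dd0.
  have := SF 1 q _ Hx0 Hq Hv; rewrite /vec4 /= => HH.
  have : (0:F) = 1.
    apply: HH; rewrite /dotv sum4 /S_Y /vec4 /= !mul0r mul1r add0r !addr0; apply: ltW; apply: lt_trans HPR HR1.
  by move/eqP; rewrite eq_sym oner_eq0.
have D0 : 0 < D by rewrite lt_def Dnz /D; lra.
pose v := vec4 0 (p o_dc / D) ((1 - p o_cd) / D) ((1 - p o_cd) / D).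
have Hv : limit_dist p 1 q v.
  apply: (G3 (K := 8 / D)) => n o.
  have S := Sm_sum p 1 q n; have A := Sm_akin p 1 q n.
  have E := ee01 Hp Hx0 Hq n.+1; have E0 := ee01 Hp Hx0 Hq 0.
  have R := Srel n.
  have V1 := vdist_ge0 Hp Hx0 Hq 0 o_dc; have V2 := vdist_le1 Hp Hx0 Hq 0 o_dc.
  have V3 := vdist_ge0 Hp Hx0 Hq n o_dd; have V4 := vdist_le1 Hp Hx0 Hq n o_dd.
  set e' := vdist p 1 q 0 o_dc - vdist p 1 q n o_dd.
  have e'b : -1 <= e' <= 1 by rewrite /e'; apply/andP; split; lra.
  have h2 := mul_bound e'b (Hp o_dc).
  have h3 : -1 <= e' * (1 - p o_cd) <= 1.
    by apply: mul_bound e'b _; apply/andP; split; lra.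
  rewrite Scc Hf' in S A.
  set a := Sm p 1 q n o_cd in S A *; set b := Sm p 1 q n o_dc in S A R *.
  set c := Sm p 1 q n o_dd in S A R *.
  have Hc : c = b - e' by rewrite /e'; lra.
  have Ha : a = n.+1%:R - 2 * b + e' by lra.
  rewrite Ha in A.
  move: E E0 h2 h3 => /andP[? ?] /andP[? ?] /andP[? ?] /andP[? ?].
  case: (ocase o) => [->|[->|[->|->]]]; rewrite /v /vec4 /=.
  - by rewrite Scc mulr0 subrr normr0 divr_ge0 //; lra.
  - apply: absdiv => //; rewrite -/a Ha.
    have -> : (n.+1%:R - 2 * b + e' - n.+1%:R * (p o_dc / D)) * D =
              (n.+1%:R - 2 * b + e') * D - n.+1%:R * p o_dc by field.
    rewrite /D; apply/andP; split; lra.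
  - apply: absdiv => //; rewrite -/b.
    have -> : (b - n.+1%:R * ((1 - p o_cd) / D)) * D =
              b * D - n.+1%:R * (1 - p o_cd) by field.
    rewrite /D; apply/andP; split; lra.
  - apply: absdiv => //; rewrite -/c Hc.
    have -> : (b - e' - n.+1%:R * ((1 - p o_cd) / D)) * D =
              (b - e') * D - n.+1%:R * (1 - p o_cd) by field.
    rewrite /D; apply/andP; split; lra.
have := SF 1 q _ Hx0 Hq Hv; rewrite /v /vec4 /= => HH.
have : (1 - p o_cd) / D = 1.
  apply: HH; rewrite /dotv sum4 /S_Y /vec4 /=.
  have -> : 0 * Rp + p o_dc / D * 1 + (1 - p o_cd) / D * 0 + (1 - p o_cd) / D * Pp =
            (p o_dc + (1 - p o_cd) * Pp) / D by field.
  rewrite ler_pdivlMr // /D; lra.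
move/(congr1 (fun x => x * D)); rewrite divfK // mul1r => E1; move: D0 E1; rewrite /D => D0 E1; lra.
Qed.


Lemma sf_of : p o_dc * (Rp - Pp) < Pp * (1 - p o_cc) ->
  p o_dc * (1 - Pp) < Pp * (1 - p o_cd) -> strictly_firm Rp Pp p.
Proof.
move=> c1 c2; split => // x0 q v Hx0 Hq Hv HsY.
have Hf' : p o_dd = 0 by exact: Hf.
have v1 := G2 Hp Hx0 Hq o_cc Hv; have v2 := G2 Hp Hx0 Hq o_cd Hv.
have v3 := G2 Hp Hx0 Hq o_dc Hv; have v4 := G2 Hp Hx0 Hq o_dd Hv.
have Hs : dotv v (one4 F) = 1.
  apply: (G1 (K := 0)) Hv => n.
  by rewrite sum4 /one4 /vec4 /= !mulr1 Sm_sum subrr normr0.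
have Ha : dotv v (fun o => p o - vec4 1 1 0 0 o) = 0.
  apply: (G1 (K := 1)) Hv => n.
  rewrite sum4 /vec4 /= !subr0 mulr0 subr0 Sm_akin.
  have := ee01 Hp Hx0 Hq n.+1; have := ee01 Hp Hx0 Hq 0.
  move=> /andP[? ?] /andP[? ?]; rewrite ler_norml; apply/andP; split; lra.
rewrite /dotv sum4 /one4 /vec4 /= !mulr1 in Hs.
rewrite /dotv sum4 /vec4 /= !subr0 Hf' mulr0 addr0 in Ha.
rewrite /dotv sum4 /S_Y /vec4 /= mulr1 mulr0 addr0 in HsY.
case/andP: (Hp o_cc) => p1a p1b; case/andP: (Hp o_cd) => p2a p2b.
case/andP: (Hp o_dc) => p3a p3b.
exact: (alg_sf HP0 HPR c1 c2 p1a p1b p2a p2b p3a p3b v1 v2 v3 v4 Hs Ha HsY).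
Qed.


Lemma part1 : strictly_firm Rp Pp p <->
  (p o_dc * (Rp - Pp) < Pp * (1 - p o_cc) /\
   p o_dc * (1 - Pp) < Pp * (1 - p o_cd)).
Proof.
split; last by case=> c1 c2; apply: sf_of.
move=> SF; split.
  by rewrite ltNge; apply/negP => H; apply: (caseA H).
by rewrite ltNge; apply/negP => H; apply: (caseB H).
Qed.

End Main.

Lemma alg2 (F : realType) (P R p1 p2 p3 a b g d : F) :
  0 < P -> P < R ->
  p1 = 1 + (a + b) * (R - P) ->
  p2 = 1 + b - (a + b) * P + d ->
  p3 = a - (a + b) * P + d ->
  ((p3 * (R - P) < P * (1 - p1)) = (a < - d)) /\
  ((p3 * (1 - P) < P * (1 - p2)) = ((1 - 2 * P) * a < - d)).
Proof.
move=> HP HPR h1 h2 h3; split.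
  rewrite -subr_gt0.
  have -> : P * (1 - p1) - p3 * (R - P) = (- (a + d)) * (R - P).
    by rewrite h1 h3; ring.
  rewrite pmulr_lgt0; last by rewrite subr_gt0.
  by apply/idP/idP => ?; lra.
rewrite -subr_gt0.
have -> : P * (1 - p2) - p3 * (1 - P) = - ((1 - 2 * P) * a + d).
  by rewrite h2 h3; ring.
by apply/idP/idP => ?; lra.
Qed.

Lemma decomp (F : realType) (Rp Pp : F) (p : outcome -> F) a b g d :
  firm p ->
  (forall o : outcome,
        p o - vec4 1 1 0 0 o =
        a * S_X Rp Pp o + b * S_Y Rp Pp o + g * one4 F o + d * e23 F o) ->
  [/\ p o_cc = 1 + (a + b) * (Rp - Pp),
      p o_cd = 1 + b - (a + b) * Pp + d &
      p o_dc = a - (a + b) * Pp + d].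
Proof.
move=> Hf H.
have e1 := H o_cc; have e2 := H o_cd; have e3 := H o_dc; have e4 := H o_dd.
rewrite /vec4 /S_X /S_Y /one4 /e23 /= in e1 e2 e3 e4.
have Hf' : p o_dd = 0 by exact: Hf.
rewrite Hf' !mulr0 !mulr1 !addr0 !subr0 in e1 e2 e3 e4.
move: e1 e2 e3 e4; rewrite /vec4 /= => e1 e2 e3 e4.
split; lra.
Qed.

Theorem theorem5p3 (F : realType) (Rp Pp : F) (p : outcome -> F) :
  0 < Pp -> Pp < Rp -> Rp < 1 -> 1 < 2 * Rp ->
  memory_one p -> firm p ->
  (strictly_firm Rp Pp p <->
     (p o_dc < Pp / (Rp - Pp) * (1 - p o_cc) /\
      p o_dc < Pp / (1 - Pp) * (1 - p o_cd))) /\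
  (forall alpha beta gamma delta : F,
     (forall o : outcome,
        p o - vec4 1 1 0 0 o =
        alpha * S_X Rp Pp o + beta * S_Y Rp Pp o + gamma * one4 F o + delta * e23 F o) ->
     (strictly_firm Rp Pp p <->
        Num.max alpha ((1 - 2 * Pp) * alpha) < - delta)).
Proof.
move=> HP0 HPR HR1 H2R Hp Hf.
have P1 : 0 < 1 - Pp by lra.
have RP : 0 < Rp - Pp by lra.
have conv1 : (p o_dc < Pp / (Rp - Pp) * (1 - p o_cc)) =
             (p o_dc * (Rp - Pp) < Pp * (1 - p o_cc)) by rewrite mulrAC ltr_pdivlMr.
have conv2 : (p o_dc < Pp / (1 - Pp) * (1 - p o_cd)) =
             (p o_dc * (1 - Pp) < Pp * (1 - p o_cd)) by rewrite mulrAC ltr_pdivlMr.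
split.
  by rewrite conv1 conv2; exact: (part1 HP0 HPR HR1 Hp Hf).
move=> a b g d H.
case: (decomp Hf H) => h1 h2 h3.
case: (@alg2 F Pp Rp _ _ _ a b g d HP0 HPR h1 h2 h3) => E1 E2.
rewrite (part1 HP0 HPR HR1 Hp Hf) E1 E2 gt_max.
by split => [[-> ->]|/andP[-> ->]].
Qed.
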